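(* Let $01234$ be a convex pentagon inscribed in a circle, with vertices in cyclic order. Let the side lengths be $$a_0=|23|,\quad a_1=|34|,\quad a_2=|40|,\quad a_3=|01|,\quad a_4=|12|,$$ so that $a_i$ is the length of the side opposite vertex $i$. Let $d_0=|14|$ be the diagonal disjoint from the side $23$. Then $$\left(d_0^2-a_2^2-a_3^2\right)^2(a_0d_0+a_1a_4)(a_1d_0+a_0a_4)(a_4d_0+a_0a_1)=(a_2a_3)^2\left[d_0^3-(a_0^2+a_1^2+a_4^2)d_0-2a_0a_1a_4\right]^2.$$ Equivalently, $X=d_0$ is a root of $$(X^2-q)^2(PX^3+SX^2+PQX+P^2)=p^2(X^3-QX-2P)^2,$$ where $p=a_2a_3$, $P=a_0a_1a_4$, $q=a_2^2+a_3^2$, $Q=a_0^2+a_1^2+a_4^2$, and $S=(a_0a_1)^2+(a_0a_4)^2+(a_1a_4)^2$.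
   Context: $|ij|$ denotes the distance between vertices $i$ and $j$. *)

(* Defs.v *)
From HB Require Import structures.
From mathcomp Require Import all_boot all_order all_algebra.
From mathcomp Require Import reals.
Set Implicit Arguments. Unset Strict Implicit. Unset Printing Implicit Defensive.
Import Order.TTheory GRing.Theory Num.Theory.
Local Open Scope ring_scope.

Section Geom.
Variable R : realType.

Definition dist (a b : R * R) : R :=
  Num.sqrt ((a.1 - b.1) ^+ 2 + (a.2 - b.2) ^+ 2).

(* signed (doubled) area of triangle abc: > 0 iff a,b,c counterclockwise *)
Definition orient (a b c : R * R) : R :=
  (b.1 - a.1) * (c.2 - a.2) - (b.2 - a.2) * (c.1 - a.1).

(* v 0, v 1, ..., v (n-1) are the vertices, in this cyclic order, of a
   (strictly) convex polygon: for every side v i v (i+1), all other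
   vertices lie strictly on the same side of it (uniformly left = ccw,
   or uniformly right = cw). *)
Definition convex_polygon (n : nat) (v : 'I_n -> R * R) : Prop :=
  (forall i j : 'I_n, j != i -> j != ordS i -> 0 < orient (v i) (v (ordS i)) (v j)) \/
  (forall i j : 'I_n, j != i -> j != ordS i -> orient (v i) (v (ordS i)) (v j) < 0).

Definition inscribed (n : nat) (v : 'I_n -> R * R) : Prop :=
  exists (c : R * R) (r : R), 0 < r /\ forall i, dist (v i) c = r.

End Geom.

(* Main.v *)
Require Import Defs.
From HB Require Import structures.
From mathcomp Require Import all_boot all_order all_algebra.
From mathcomp Require Import reals.
From mathcomp Require Import ring lra.
Import Order.TTheory GRing.Theory Num.Theory.
Local Open Scope ring_scope.

Definition orr {R : rcfType} (ax ay bx by' cx cy : R) := (bx-ax)*(cy-ay) - (by'-ay)*(cx-ax).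
Definition sq {R : rcfType} (ax ay bx by' : R) := (ax-bx)^+2 + (ay-by')^+2.

Lemma circum (R : rcfType) (ax ay bx by' cx cy r2 : R) :
  ax^+2+ay^+2 = r2 -> bx^+2+by'^+2 = r2 -> cx^+2+cy^+2 = r2 ->
  4*r2*(orr ax ay bx by' cx cy)^+2 = sq ax ay bx by' * sq bx by' cx cy * sq cx cy ax ay.
Proof.
move=> ha hb hc.
have hPU : -2*(ax*(bx-ax)+ay*(by'-ay)) = (bx-ax)^+2+(by'-ay)^+2.
  by apply/eqP; rewrite -subr_eq0; apply/eqP; transitivity ((ax^+2+ay^+2) - (bx^+2+by'^+2)); [ring | rewrite ha hb subrr].
have hPW : -2*(ax*(cx-ax)+ay*(cy-ay)) = (cx-ax)^+2+(cy-ay)^+2.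
  by apply/eqP; rewrite -subr_eq0; apply/eqP; transitivity ((ax^+2+ay^+2) - (cx^+2+cy^+2)); [ring | rewrite ha hc subrr].
rewrite -ha.
transitivity ((-2*(ax*(bx-ax)+ay*(by'-ay)))^+2 * ((cx-ax)^+2+(cy-ay)^+2)
  + (-2*(ax*(cx-ax)+ay*(cy-ay)))^+2 * ((bx-ax)^+2+(by'-ay)^+2)
  - 2 * (-2*(ax*(bx-ax)+ay*(by'-ay))) * (-2*(ax*(cx-ax)+ay*(cy-ay))) * ((bx-ax)*(cx-ax)+(by'-ay)*(cy-ay))).
  rewrite /orr; ring.
rewrite hPU hPW /sq; ring.
Qed.

Lemma insc (R : rcfType) (x1 y1 x2 y2 x3 y3 x4 y4 r2 : R) :
  x1^+2+y1^+2 = r2 -> x2^+2+y2^+2 = r2 -> x3^+2+y3^+2 = r2 -> x4^+2+y4^+2 = r2 ->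
  ((x1-x2)*(x3-x2)+(y1-y2)*(y3-y2)) * orr x3 y3 x4 y4 x1 y1
  + orr x1 y1 x2 y2 x3 y3 * ((x1-x4)*(x3-x4)+(y1-y4)*(y3-y4)) = 0.
Proof.
move=> h1 h2 h3 h4.
transitivity (-((x1^+2+y1^+2 - r2) * orr x2 y2 x3 y3 x4 y4 - (x2^+2+y2^+2 - r2) * orr x1 y1 x3 y3 x4 y4
  + (x3^+2+y3^+2 - r2) * orr x1 y1 x2 y2 x4 y4 - (x4^+2+y4^+2 - r2) * orr x1 y1 x2 y2 x3 y3)).
  rewrite /orr; ring.
rewrite h1 h2 h3 h4 !subrr; ring.
Qed.
Lemma fin (R : rcfType) (a0 a1 a2 a3 a4 d r2 E : R) :
  0 < r2 -> 0 < a0 -> 0 < a4 -> 0 < a1*d + a4*a0 ->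
  r2*(4*a2^+2*a3^+2 - (a2^+2+a3^+2-d^+2)^+2) = a2^+2*a3^+2*d^+2 ->
  r2*(4*a4^+2*a0^+2 - (a4^+2+a0^+2-E)^+2) = a4^+2*a0^+2*E ->
  a1*d*(a4^+2+a0^+2-E) + a4*a0*(a1^+2+d^+2-E) = 0 ->
  (d ^+ 2 - a2 ^+ 2 - a3 ^+ 2) ^+ 2
    * (a0 * d + a1 * a4) * (a1 * d + a0 * a4) * (a4 * d + a0 * a1)
  = (a2 * a3) ^+ 2
    * (d ^+ 3 - (a0 ^+ 2 + a1 ^+ 2 + a4 ^+ 2) * d - 2 * a0 * a1 * a4) ^+ 2.
Proof.
move=> r2gt0 a0gt0 a4gt0 sgt0 H1 H2 H3.
set s := a1*d + a4*a0.
have s0 : s != 0 by rewrite gt_eqF.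
have hE : E = (a4*a1 + a0*d)*(a4*d+a0*a1)/s.
  apply: (mulIf s0); rewrite divfK //.
  apply/eqP; rewrite -subr_eq0; apply/eqP.
  transitivity (-(a1*d*(a4^+2+a0^+2-E) + a4*a0*(a1^+2+d^+2-E))); first by rewrite /s; ring.
  by rewrite H3 oppr0.
have hq : r2 * (4*s^+2 - (a4^+2+a0^+2-a1^+2-d^+2)^+2) - (a0*d+a1*a4)*(a1*d+a0*a4)*(a4*d+a0*a1) = 0.
  have a40 : a4^+2*a0^+2 != 0 by rewrite mulf_neq0 // expf_neq0 // gt_eqF.
  apply: (mulfI a40); rewrite mulr0.
  transitivity (s^+2 * (r2*(4*a4^+2*a0^+2 - (a4^+2+a0^+2-E)^+2) - a4^+2*a0^+2*E)).
    rewrite hE /s; field; exact: s0.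
  by rewrite H2 subrr mulr0.
have r20 : r2 != 0 by rewrite gt_eqF.
apply: (mulfI r20).
apply/eqP; rewrite -subr_eq0; apply/eqP.
transitivity (- (r2*(4*a2^+2*a3^+2 - (a2^+2+a3^+2-d^+2)^+2) - a2^+2*a3^+2*d^+2)
    * ((a0*d+a1*a4)*(a1*d+a0*a4)*(a4*d+a0*a1))
  + a2^+2*a3^+2*d^+2 * (r2 * (4*s^+2 - (a4^+2+a0^+2-a1^+2-d^+2)^+2) - (a0*d+a1*a4)*(a1*d+a0*a4)*(a4*d+a0*a1))).
  rewrite /s; ring.
by rewrite H1 hq subrr; ring.
Qed.

Arguments circum {R ax ay bx by' cx cy r2}.
Arguments insc {R x1 y1 x2 y2 x3 y3 x4 y4 r2}.

Lemma sq_ge0 (R : rcfType) (a b c e : R) : 0 <= sq a b c e.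
Proof. by rewrite /sq addr_ge0 // sqr_ge0. Qed.

Lemma core (R : rcfType) (r x0 y0 x1 y1 x2 y2 x3 y3 x4 y4 : R) :
  0 < r ->
  x0^+2+y0^+2 = r^+2 -> x1^+2+y1^+2 = r^+2 -> x2^+2+y2^+2 = r^+2 ->
  x3^+2+y3^+2 = r^+2 -> x4^+2+y4^+2 = r^+2 ->
  0 < orr x1 y1 x2 y2 x3 y3 * orr x3 y3 x4 y4 x1 y1 ->
  let a0 := Num.sqrt (sq x2 y2 x3 y3) in
  let a1 := Num.sqrt (sq x3 y3 x4 y4) in
  let a2 := Num.sqrt (sq x4 y4 x0 y0) in
  let a3 := Num.sqrt (sq x0 y0 x1 y1) in
  let a4 := Num.sqrt (sq x1 y1 x2 y2) in
  let d := Num.sqrt (sq x1 y1 x4 y4) in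
  (d ^+ 2 - a2 ^+ 2 - a3 ^+ 2) ^+ 2
    * (a0 * d + a1 * a4) * (a1 * d + a0 * a4) * (a4 * d + a0 * a1)
  = (a2 * a3) ^+ 2
    * (d ^+ 3 - (a0 ^+ 2 + a1 ^+ 2 + a4 ^+ 2) * d - 2 * a0 * a1 * a4) ^+ 2.
Proof.
move=> r0 h0 h1 h2 h3 h4 hc a0 a1 a2 a3 a4 d.
set cr2 := orr x1 y1 x2 y2 x3 y3.
set cr4 := orr x3 y3 x4 y4 x1 y1.
have C014 := circum h0 h1 h4.
have C123 := circum h1 h2 h3.
have C341 := circum h3 h4 h1.
have I := insc h1 h2 h3 h4.
rewrite -/cr2 in C123 I hc; rewrite -/cr4 in C341 I hc.
have cr2n : cr2 != 0 by apply/negP => /eqP e; move: hc; rewrite e mul0r ltxx.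
have cr4n : cr4 != 0 by apply/negP => /eqP e; move: hc; rewrite e mulr0 ltxx.
have r2n : r^+2 != 0 by rewrite expf_neq0 // gt_eqF.
have n4 : (4:R) != 0 by apply/eqP; lra.
have P123 : sq x1 y1 x2 y2 * sq x2 y2 x3 y3 * sq x3 y3 x1 y1 != 0.
  by rewrite -C123 !mulf_neq0 // gt_eqF.
have P341 : sq x3 y3 x4 y4 * sq x4 y4 x1 y1 * sq x1 y1 x3 y3 != 0.
  by rewrite -C341 !mulf_neq0 // gt_eqF.
have S12 : 0 < sq x1 y1 x2 y2.
  by rewrite lt_def sq_ge0 andbT; move: P123; rewrite !mulf_eq0 !negb_or => /andP[/andP[]].
have S23 : 0 < sq x2 y2 x3 y3.
  by rewrite lt_def sq_ge0 andbT; move: P123; rewrite !mulf_eq0 !negb_or => /andP[/andP[]].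
have S34 : 0 < sq x3 y3 x4 y4.
  by rewrite lt_def sq_ge0 andbT; move: P341; rewrite !mulf_eq0 !negb_or => /andP[/andP[]].
have S41 : 0 < sq x4 y4 x1 y1.
  by rewrite lt_def sq_ge0 andbT; move: P341; rewrite !mulf_eq0 !negb_or => /andP[/andP[]].
have S14 : 0 < sq x1 y1 x4 y4.
  by move: S41; rewrite /sq (_ : (x4-x1)^+2 + (y4-y1)^+2 = (x1-x4)^+2+(y1-y4)^+2) //; ring.
have a0p : 0 < a0 by rewrite sqrtr_gt0.
have a1p : 0 < a1 by rewrite sqrtr_gt0.
have a4p : 0 < a4 by rewrite sqrtr_gt0.
have dp : 0 < d by rewrite sqrtr_gt0.
have A0 : a0^+2 = sq x2 y2 x3 y3 by rewrite sqr_sqrtr // sq_ge0.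
have A1 : a1^+2 = sq x3 y3 x4 y4 by rewrite sqr_sqrtr // sq_ge0.
have A2 : a2^+2 = sq x4 y4 x0 y0 by rewrite sqr_sqrtr // sq_ge0.
have A3 : a3^+2 = sq x0 y0 x1 y1 by rewrite sqr_sqrtr // sq_ge0.
have A4 : a4^+2 = sq x1 y1 x2 y2 by rewrite sqr_sqrtr // sq_ge0.
have D : d^+2 = sq x1 y1 x4 y4 by rewrite sqr_sqrtr // sq_ge0.
apply: (@fin _ a0 a1 a2 a3 a4 d (r^+2) (sq x3 y3 x1 y1)).
- by rewrite exprn_gt0.
- by [].
- by [].
- by rewrite addr_gt0 // mulr_gt0.
- rewrite A2 A3 D (_ : sq x4 y4 x0 y0 * sq x0 y0 x1 y1 * sq x1 y1 x4 y4 = 4 * r^+2 * (orr x0 y0 x1 y1 x4 y4)^+2).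
    by rewrite /sq /orr; ring.
  by rewrite C014 /sq; ring.
- rewrite A4 A0 (_ : sq x1 y1 x2 y2 * sq x2 y2 x3 y3 * sq x3 y3 x1 y1 = 4 * r^+2 * cr2^+2).
    by rewrite /sq /cr2 /orr; ring.
  by rewrite C123.
- set X := cr2 * (a1 * d).
  set Y := cr4 * (a4 * a0).
  have XY2 : X^+2 = Y^+2.
    apply: (mulfI r2n); apply: (@mulfI _ 4); first by rewrite pnatr_eq0.
    transitivity ((4 * r^+2 * cr2^+2) * a1^+2 * d^+2); first by rewrite /X; ring.
    transitivity ((4 * r^+2 * cr4^+2) * a4^+2 * a0^+2); last by rewrite /Y; ring.
    by rewrite C123 C341 A1 D A4 A0 /sq; ring.
  have XYp : 0 < X * Y.
    rewrite /X /Y (_ : cr2 * (a1 * d) * (cr4 * (a4 * a0)) = (cr2 * cr4) * (a1 * d * a4 * a0)); last by ring.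
    by rewrite mulr_gt0 // !mulr_gt0.
  have XY : X = Y.
    have : (X - Y) * (X + Y) = 0 by transitivity (X^+2 - Y^+2); [ring | rewrite XY2 subrr].
    move/eqP; rewrite mulf_eq0 => /orP[]; first by rewrite subr_eq0 => /eqP.
    move=> /eqP e; have : (X + Y)^+2 = 0 by rewrite e expr0n.
    move=> e2; have : 0 < (X+Y)^+2.
      rewrite (_ : (X+Y)^+2 = X^+2 + Y^+2 + 2*(X*Y)); last by ring.
      by have := sqr_ge0 X; have := sqr_ge0 Y; move: XYp; lra.
    by rewrite e2 ltxx.
  apply: (mulfI cr4n); rewrite mulr0.
  transitivity (a1 * d * (((x1-x2)*(x3-x2)+(y1-y2)*(y3-y2)) * cr4 + cr2 * ((x1-x4)*(x3-x4)+(y1-y4)*(y3-y4))) * 2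
     + 2 * ((x1-x4)*(x3-x4)+(y1-y4)*(y3-y4)) * (Y - X)).
    rewrite /X /Y A4 A0 A1 D /sq; ring.
  by rewrite I XY subrr; ring.
Qed.

Theorem theorem4 (R : realType) (v : 'I_5 -> R * R) :
  convex_polygon v -> inscribed v ->
  let a0 := dist (v (inord 2)) (v (inord 3)) in
  let a1 := dist (v (inord 3)) (v (inord 4)) in
  let a2 := dist (v (inord 4)) (v (inord 0)) in
  let a3 := dist (v (inord 0)) (v (inord 1)) in
  let a4 := dist (v (inord 1)) (v (inord 2)) in
  let d0 := dist (v (inord 1)) (v (inord 4)) in
  (d0 ^+ 2 - a2 ^+ 2 - a3 ^+ 2) ^+ 2
    * (a0 * d0 + a1 * a4) * (a1 * d0 + a0 * a4) * (a4 * d0 + a0 * a1)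
  = (a2 * a3) ^+ 2
    * (d0 ^+ 3 - (a0 ^+ 2 + a1 ^+ 2 + a4 ^+ 2) * d0 - 2 * a0 * a1 * a4) ^+ 2.
Proof.
move=> hconv [c [r [r0 hr]]].
have dE : forall a b : R * R, dist a b
   = Num.sqrt (sq (a.1 - c.1) (a.2 - c.2) (b.1 - c.1) (b.2 - c.2)).
  move=> a b; rewrite /dist /sq; congr (Num.sqrt _); ring.
have hC : forall k, ((v k).1 - c.1)^+2 + ((v k).2 - c.2)^+2 = r^+2.
  move=> k; have := hr k; rewrite /dist => e.
  have ge : 0 <= ((v k).1 - c.1)^+2 + ((v k).2 - c.2)^+2 by rewrite addr_ge0 // sqr_ge0.
  by rewrite -(sqr_sqrtr ge) e.
have oE : forall a b e : R * R, orient a b e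
   = orr (a.1 - c.1) (a.2 - c.2) (b.1 - c.1) (b.2 - c.2) (e.1 - c.1) (e.2 - c.2).
  by move=> a b e; rewrite /orient /orr; ring.
have S1 : ordS (inord 1 : 'I_5) = inord 2 by apply/val_inj; rewrite /= !inordK.
have S3 : ordS (inord 3 : 'I_5) = inord 4 by apply/val_inj; rewrite /= !inordK.
have n13 : (inord 3 : 'I_5) != inord 1 by apply/eqP => /(congr1 val); rewrite /= !inordK.
have n14 : (inord 3 : 'I_5) != inord 2 by apply/eqP => /(congr1 val); rewrite /= !inordK.
have n31 : (inord 1 : 'I_5) != inord 3 by apply/eqP => /(congr1 val); rewrite /= !inordK.
have n34 : (inord 1 : 'I_5) != inord 4 by apply/eqP => /(congr1 val); rewrite /= !inordK.
have hc : 0 < orient (v (inord 1)) (v (inord 2)) (v (inord 3))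
             * orient (v (inord 3)) (v (inord 4)) (v (inord 1)).
  case: hconv => H.
    have := H (inord 1) (inord 3) n13; rewrite S1 => /(_ n14) p1.
    have := H (inord 3) (inord 1) n31; rewrite S3 => /(_ n34) p2.
    by rewrite mulr_gt0.
  have := H (inord 1) (inord 3) n13; rewrite S1 => /(_ n14) p1.
  have := H (inord 3) (inord 1) n31; rewrite S3 => /(_ n34) p2.
  by rewrite -mulrNN mulr_gt0 // oppr_gt0.
rewrite !oE in hc.
move=> a0 a1 a2 a3 a4 d0.
have := @core _ _ _ _ _ _ _ _ _ _ _ _ r0 (hC (inord 0)) (hC (inord 1)) (hC (inord 2)) (hC (inord 3)) (hC (inord 4)) hc.
by rewrite /= -!dE.
Qed.
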